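(* Let $X$ be a Banach space, $\mathfrak{L}$ a metric space of functions on $\mathbb{R}$, and $g\in\mathfrak{L}$ translation compact, with hull $\mathcal{H}(g)$, such that the translations $T(h)$ belong to $\mathcal{C}(\mathcal{H}(g),\mathcal{H}(g))$ for all $h\in\mathbb{R}$. Suppose that for every $f\in\mathcal{H}(g)$ the equation $\frac{d}{dt}u(t)=\mathcal{A}(u(t))+f(t)$ (with $\mathcal{A}$ a densely defined operator on $X$) is well posed for every initial datum $u_0\in X$ at every initial time $\tau\in\mathbb{R}$, generating a process $U_f(t,\tau)$ on $X$, and that $U_f(h+t,h+\tau)=U_{T(h)f}(t,\tau)$ for all $f\in\mathcal{H}(g)$, $h\in\mathbb{R}$, $t\ge\tau$. Assume the family $\{U_f(t,\tau)\}_{f\in\mathcal{H}(g)}$ is uniformly totally dissipative and asymptotically closed, and that the map $f\mapsto U_f(t,\tau)u_0$ from $\mathcal{H}(g)$ to $X$ is continuous for every fixed $t\ge\tau$ and $u_0\in X$. Then $A_{\{g\}}=A_{\mathcal{H}(g)}$, where $A_{\{g\}}$ is the uniform global attractor of the single process $U_g(t,\tau)$ and $A_{\mathcal{H}(g)}$ that of the family $\{U_f(t,\tau)\}_{f\in\mathcal{H}(g)}$.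
   Context: A process on $X$ is a family of maps $U(t,\tau):X\to X$, $t\ge\tau$, with $U(\tau,\tau)=\mathrm{id}_X$ and $U(t,\tau)=U(t,s)U(s,\tau)$ for $t\ge s\ge\tau$. $g$ is translation compact in $\mathfrak{L}$ if $\{g(\cdot+h):h\in\mathbb{R}\}$ is precompact in $\mathfrak{L}$; its closure is the hull $\mathcal{H}(g)$. $[T(h)f](t)=f(h+t)$. For nonempty $B,C\subset X$, $\delta_X(B,C)=\sup_{x\in B}\inf_{\xi\in C}\|x-\xi\|$. For a family $\{U_f(t,\tau)\}_{f\in\Lambda}$ with $\Lambda\subset\mathcal{H}(g)$ (a single process being the case $\Lambda=\{g\}$), a set $K\subset X$ is uniformly attracting if for every bounded $C\subset X$, $\lim_{t-\tau\to\infty}\sup_{f\in\Lambda}\delta_X(U_f(t,\tau)C,K)=0$, and the uniform global attractor $A_\Lambda$ is the compact uniformly attracting set contained in every compact uniformly attracting set. The family is uniformly totally dissipative if for every $\varepsilon>0$ there is a finite $M_\varepsilon\subset X$ whose open $\varepsilon$-neighborhood is uniformly absorbing (for each bounded $C$ there is $t_e$ with $U_f(t,\tau)C$ inside it for all $f\in\mathcal{H}(g)$ whenever $t-\tau\ge t_e$). The family is asymptotically closed if there is a (finite with at least two terms, or infinite) sequence $0=h_0<h_1<\cdots$ such that whenever $f_n\to f$ in $\mathcal{H}(g)$ and $U_{f_n}(h_k,0)x_n\to\xi^k$ as $n\to\infty$ for every $k$, then $U_f(h_k,0)\xi^0=\xi^k$ for every $k$. *)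

(* Defs.v *)
From HB Require Import structures.
From mathcomp Require Import all_boot all_order all_algebra.
From mathcomp Require Import all_classical all_reals all_analysis.
Set Implicit Arguments. Unset Strict Implicit. Unset Printing Implicit Defensive.
Import Order.TTheory GRing.Theory Num.Theory.
Import numFieldNormedType.Exports.
Local Open Scope classical_set_scope.
Local Open Scope ring_scope.

Section Defs.
Variables (R : realType) (X : normedModType R).

Definition semidev (B C : set X) : \bar R :=
  ereal_sup [set ereal_inf [set (`|x - xi|)%:E | xi in C] | x in B].

Variable L : Type.
Variable U : L -> R -> R -> X -> X.

Definition is_process (f : L) : Prop :=
  (forall tau, U f tau tau = id) /\
  (forall t s tau, tau <= s -> s <= t -> U f t tau = U f t s \o U f s tau).

Definition unif_attracting (Lam : set L) (K : set X) : Prop :=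
  forall C : set X, bounded_set C ->
    forall eps : R, 0 < eps -> exists T : R, forall t tau : R,
      tau <= t -> T <= t - tau ->
      (ereal_sup [set semidev (U f t tau @` C) K | f in Lam] <= eps%:E)%E.

Definition unif_global_attractor (Lam : set L) (A : set X) : Prop :=
  [/\ compact A, unif_attracting Lam A &
      forall K : set X, compact K -> unif_attracting Lam K -> A `<=` K].

Definition unif_totally_dissipative (H : set L) : Prop :=
  forall eps : R, 0 < eps -> exists M : set X, finite_set M /\
    forall C : set X, bounded_set C -> exists te : R,
      forall f t tau, H f -> tau <= t -> te <= t - tau ->
        U f t tau @` C `<=` [set x | exists2 m, M m & `|x - m| < eps].

End Defs.

Section Defs2.
Variables (R : realType) (X : normedModType R) (L : pseudoMetricType R).
Variable U : L -> R -> R -> X -> X.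

(* asymptotically closed: a finite (>= 2 terms) or infinite sequence
   0 = h_0 < h_1 < ..., indexed by I = {k | k < n} (n >= 2) or I = nat *)
Definition asymp_closed (H : set L) : Prop :=
  exists (I : set nat) (h : nat -> R),
    ((exists n : nat, (2 <= n)%N /\ I = [set k | (k < n)%N]) \/ I = setT) /\
    h 0%N = 0 /\ (forall i j, I i -> I j -> (i < j)%N -> h i < h j) /\
    forall (fn : nat -> L) (f : L) (xn : nat -> X) (xi : nat -> X),
      (forall n, H (fn n)) -> H f -> fn @ \oo --> f ->
      (forall k, I k -> (fun n => U (fn n) (h k) 0 (xn n)) @ \oo --> xi k) ->
      forall k, I k -> U f (h k) 0 (xi 0%N) = xi k.
End Defs2.

(* f' is the translate T(h) f, where ev gives the function on R represented
   by an element of the function space *)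
Definition is_translate (R : realType) (L Y : Type) (ev : L -> R -> Y)
  (h : R) (f f' : L) : Prop := ev f' = (fun t => ev f (h + t)).

Definition hull (R : realType) (L : topologicalType) (Y : Type)
  (ev : L -> R -> Y) (g : L) : set L :=
  closure [set f | exists h : R, is_translate ev h g f].

(* Main.v *)
Require Import Defs.
From HB Require Import structures.
From mathcomp Require Import all_boot all_order all_algebra.
From mathcomp Require Import all_classical all_reals all_analysis.
From mathcomp Require Import lra.
Import Order.TTheory GRing.Theory Num.Theory.
Import numFieldNormedType.Exports.
Local Open Scope classical_set_scope.
Local Open Scope ring_scope.
Set Implicit Arguments. Unset Strict Implicit. Unset Printing Implicit Defensive.

Section Aux.
Variables (R : realType) (X : completeNormedModType R).

Definition nbM (M : seq X) (e : R) : set X :=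
  [set x | exists2 m, m \in M & `|x - m| < e].

Lemma ultra_nbM (F : set_system X) (FU : UltraFilter F) (M : seq X) (e : R) :
  F (nbM M e) -> exists2 m, m \in M & F (ball m e).
Proof.
elim: M => [|a s IH] FM.
  exfalso; apply: (filter_not_empty F); apply: filterS FM => x [m].
  by rewrite in_nil.
have [Fa|Fna] := in_ultra_setVsetC (ball a e) FU.
  by exists a => //; rewrite mem_head.
have : F (nbM s e).
  apply: filterS (filterI FM Fna) => x [[m]].
  rewrite in_cons => /orP[/eqP->|ms] xm nb.
    by exfalso; apply: nb; rewrite -ball_normE /= distrC.
  by exists m.
by move/IH => [m ms Fm]; exists m => //; rewrite in_cons ms orbT.
Qed.

Lemma TB_compact (S : set X) :
  (forall e : R, 0 < e -> exists M : seq X, S `<=` nbM M e) ->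
  compact (closure S).
Proof.
move=> hS; rewrite compact_ultra => F FU FS.
have PF : ProperFilter F by apply: ultra_proper.
have cF : cauchy_ex F.
  move=> e e0.
  have e2 : 0 < e / 2 by rewrite divr_gt0.
  have [M SM] := hS (e / 2) e2.
  have : F (nbM M e).
    apply: filterS FS => x clx.
    have [s [Ss bs]] := clx (ball x (e/2)) (nbhsx_ballx x (e/2) e2).
    have [m mM dm] := SM s Ss.
    exists m => //.
    move: bs; rewrite -ball_normE /= => bs.
    have := ler_distD s x m; lra.
  by move=> /(@ultra_nbM F FU) [m _ Fm]; exists m.
have cvF : cvg F := cauchy_cvg F (cauchy_exP F cF).
exists (lim F); split; last exact: cvF.
apply: closed_closure => B /cvF FB.
exact: (@filter_ex _ F _ _ (filterI FS FB)).
Qed.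

End Aux.

Definition att2 (R : realType) (X : normedModType R) (L : Type)
  (U : L -> R -> R -> X -> X) (Lam : set L) (K : set X) :=
  forall C : set X, bounded_set C -> forall eps : R, 0 < eps -> exists T : R,
    forall f t tau x, Lam f -> tau <= t -> T <= t - tau -> C x ->
      exists2 k, K k & `|U f t tau x - k| < eps.

Lemma attE (R : realType) (X : normedModType R) (L : Type)
  (U : L -> R -> R -> X -> X) (Lam : set L) (K : set X) :
  unif_attracting U Lam K <-> att2 U Lam K.
Proof.
split=> hA C bC eps e0.
- have e2 : 0 < eps / 2 by rewrite divr_gt0.
  have [T hT] := hA C bC (eps/2) e2.
  exists T => f t tau x Lf le le' Cx.
  apply: contrapT => nk.
  have h1 := hT t tau le le'.
  have h2 : (eps%:E <= ereal_inf [set (`|U f t tau x - xi|)%:E | xi in K])%E.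
    apply: le_ereal_inf_tmp => _ [k Kk <-]; rewrite lee_fin leNgt.
    by apply/negP => lt; apply: nk; exists k.
  have h3 : (ereal_inf [set (`|U f t tau x - xi|)%:E | xi in K]
      <= semidev (U f t tau @` C) K)%E.
    by apply: ereal_sup_ubound; exists (U f t tau x) => //; exists x.
  have h4 : (semidev (U f t tau @` C) K <=
     ereal_sup [set semidev (U f0 t tau @` C) K | f0 in Lam])%E.
    by apply: ereal_sup_ubound; exists f.
  have := le_trans h2 (le_trans h3 (le_trans h4 h1)); rewrite lee_fin; lra.
- have [T hT] := hA C bC eps e0.
  exists T => t tau le le'.
  apply: ge_ereal_sup => _ [f Lf <-].
  apply: ge_ereal_sup => _ [_ [x Cx <-] <-].
  have [k Kk lt] := hT f t tau x Lf le le' Cx.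
  apply: (@le_trans _ _ (`|U f t tau x - k|)%:E).
    by apply: ereal_inf_lbound; exists k.
  by rewrite lee_fin ltW.
Qed.

Section Attr.
Variables (R : realType) (X : completeNormedModType R) (L : Type)
  (U : L -> R -> R -> X -> X) (H : set L).
Hypothesis hdis : unif_totally_dissipative U H.

Definition Om (C : set X) : set X := [set y | forall e : R, 0 < e -> forall n : R,
  exists f, exists t, exists tau, exists x,
    [/\ H f, tau <= t, n <= t - tau, C x & `|U f t tau x - y| < e]].
Definition A0 : set X := [set y | exists2 C, bounded_set C & Om C y].
Definition Att : set X := closure A0.

Lemma dis_seq e : 0 < e -> exists M : seq X, forall C, bounded_set C ->
  exists te : R, forall f t tau, H f -> tau <= t -> te <= t - tau ->
    U f t tau @` C `<=` nbM M e.
Proof.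
move=> e0; have [M [fM hM]] := hdis e0.
have [s sM] := (finite_seqP M).1 fM.
exists s => C bC; have [te hte] := hM C bC; exists te => f t tau Hf le le' y Uy.
have [m Mm d] := hte f t tau Hf le le' y Uy.
by exists m => //; move: Mm; rewrite sM.
Qed.

Lemma Att_compact : compact Att.
Proof.
apply: TB_compact => e e0.
have e2 : 0 < e / 2 by rewrite divr_gt0.
have [M hM] := dis_seq e2.
exists M => y [C bC Oy].
have [te hte] := hM C bC.
have [f [t [tau [x [Hf le le' Cx d]]]]] := Oy (e/2) e2 te.
have [m mM dm] := hte f t tau Hf le le' (U f t tau x) (ex_intro2 _ _ x Cx erefl).
exists m => //.
have := ler_distD (U f t tau x) y m; rewrite (distrC y (U f t tau x)); lra.
Qed.

Lemma Att_min K : closed K -> att2 U H K -> Att `<=` K.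
Proof.
move=> cK hK.
suff A0K : A0 `<=` closure K.
  rewrite ((closure_id K).1 cK).
  exact: subset_trans (closure_subset A0K) (@closed_closure _ K).
move=> y [C bC Oy] B /nbhs_ballP [e e0 hB].
have e2 : 0 < e / 2 by rewrite divr_gt0.
have [T hT] := hK C bC (e/2) e2.
have [f [t [tau [x [Hf le le' Cx d]]]]] := Oy (e/2) e2 T.
have [k Kk dk] := hT f t tau x Hf le le' Cx.
exists k; split => //; apply: hB; rewrite -ball_normE /=.
have := ler_distD (U f t tau x) y k; rewrite (distrC y (U f t tau x)); lra.
Qed.


Lemma Att_att : att2 U H Att.
Proof.
move=> C bC eps e0; apply: contrapT => hn.
have hq : forall n : nat, exists p : L * R * R * X,
  [/\ H p.1.1.1, p.1.2 <= p.1.1.2, n%:R <= p.1.1.2 - p.1.2, C p.2 &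
     forall k, Att k -> eps <= `|U p.1.1.1 p.1.1.2 p.1.2 p.2 - k|].
  move=> n; apply: contrapT => hp; apply: hn; exists n%:R.
  move=> f t tau x Hf le le' Cx.
  apply: contrapT => nk; apply: hp; exists (f, t, tau, x); split => // k Ak.
  by rewrite leNgt; apply/negP => lt; apply: nk; exists k.
have [p hp] := choice hq.
pose y n := U (p n).1.1.1 (p n).1.1.2 (p n).1.2 (p n).2.
have cY : compact (closure (range y)).
  apply: TB_compact => e e0'.
  have [M hM] := dis_seq e0'.
  have [te hte] := hM C bC.
  have [N hN] : exists N : nat, te < N%:R.
    by exists (Num.Def.trunc te).+1; exact: truncnS_gt.
  exists (M ++ [seq y k | k <- iota 0 N]) => _ [n _ <-].
  case: (ltnP n N) => nN.
    exists (y n); last by rewrite subrr normr0.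
    by rewrite mem_cat; apply/orP; right; apply/mapP; exists n => //; rewrite mem_iota.
  have [Hf le le' Cx _] := hp n.
  have tle : te <= (p n).1.1.2 - (p n).1.2.
    have : (N%:R : R) <= n%:R by rewrite ler_nat.
    lra.
  have [m mM dm] := hte _ _ _ Hf le tle (y n) (ex_intro2 _ _ (p n).2 Cx erefl).
  by exists m => //; rewrite mem_cat mM.
have FY : (y @ \oo) (closure (range y)).
  have h1 : \forall n \near \oo, closure (range y) (y n).
    by apply: filterE => n; apply: subset_closure; exists n.
  exact: h1.
have [z [Yz clz]] := cY (y @ \oo) _ FY.
have Az : A0 z.
  exists C => // e e1 n0.
  have [N0 hN0] : exists N0 : nat, n0 < N0%:R.
    by exists (Num.Def.trunc n0).+1; exact: truncnS_gt.
  have FN : (y @ \oo) (y @` [set n | (N0 <= n)%N]).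
    by apply: filterS (nbhs_infty_ge N0) => m mN; exists m.
  have [w [[m mN <-] bw]] := clz _ _ FN (nbhsx_ballx z e e1).
  have [Hf le le' Cx _] := hp m.
  exists (p m).1.1.1, (p m).1.1.2, (p m).1.2, (p m).2; split => //.
    have : (N0%:R : R) <= m%:R by rewrite ler_nat.
    lra.
  by move: bw; rewrite -ball_normE /= distrC.
have FR : (y @ \oo) (range y).
  have h1 : \forall n \near \oo, range y (y n) by apply: filterE => n; exists n.
  exact: h1.
have [w [[m _ <-] bw]] := clz _ _ FR (nbhsx_ballx z eps e0).
have [_ _ _ _ hk] := hp m.
have := hk z (subset_closure Az).
move: bw; rewrite -ball_normE /= distrC; lra.
Qed.

End Attr.

Theorem theorem7p4
  (R : realType) (X : completeNormedModType R)
  (L : pseudoMetricType R) (ev : L -> R -> X) (g : L)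
  (T : R -> L -> L) (U : L -> R -> R -> X -> X) :
  hausdorff_space L ->
  injective ev ->
  (* g translation compact *)
  (forall h : R, exists f, is_translate ev h g f) ->
  compact (hull ev g) ->
  (* T(h) in C(H(g), H(g)) *)
  (forall h f, hull ev g f -> is_translate ev h f (T h f)) ->
  (forall h, T h @` hull ev g `<=` hull ev g) ->
  (forall h, {within hull ev g, continuous (T h)}) ->
  (* processes and translation identity *)
  (forall f, hull ev g f -> is_process U f) ->
  (forall f h t tau, hull ev g f -> tau <= t ->
     U f (h + t) (h + tau) = U (T h f) t tau) ->
  unif_totally_dissipative U (hull ev g) ->
  asymp_closed U (hull ev g) ->
  (forall t tau u0, tau <= t ->
     {within hull ev g, continuous (fun f => U f t tau u0)}) ->
  exists A : set X,
    unif_global_attractor U [set g] A /\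
    unif_global_attractor U (hull ev g) A.
Proof.
move=> _ inj _ _ hT _ _ _ htr hdis _ hcont.
have gH : hull ev g g.
  apply: subset_closure; exists 0; rewrite /is_translate.
  by apply: funext => t; rewrite add0r.
have gtoH : forall K, att2 U [set g] K -> att2 U (hull ev g) K.
  move=> K hK C bC eps e0.
  have e2 : 0 < eps / 2 by rewrite divr_gt0.
  have [T0 hT0] := hK C bC (eps/2) e2.
  exists T0 => f t tau x Hf le le' Cx.
  have := hcont t tau x le.
  move/subspace_continuousP => /(_ f Hf) /cvgrPdist_lt /(_ (eps/2) e2) hW.
  have [f' [[h trh] Wf']] := Hf _ hW.
  have Hf' : hull ev g f' by apply: subset_closure; exists h.
  have ef : f' = T h g by apply: inj; rewrite trh (hT h g gH).
  have := htr g h t tau gH le; rewrite -ef => eU.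
  have le2 : h + tau <= h + t by rewrite lerD2l.
  have le2' : T0 <= (h + t) - (h + tau) by lra.
  have [k Kk dk] := hT0 g (h + t) (h + tau) x erefl le2 le2' Cx.
  exists k => //.
  move: dk; rewrite eU => dk.
  have := Wf' Hf'; rewrite /= => d1.
  have := ler_distD (U f' t tau x) (U f t tau x) k; lra.
exists (Att U (hull ev g)).
have cA := Att_compact hdis.
have aA := Att_att hdis.
split; split => //.
- apply/attE => C bC eps e0; have [T0 hT0] := aA C bC eps e0.
  by exists T0 => f t tau x -> ; apply: hT0.
- move=> K cK /attE aK; apply: Att_min.
    exact: compact_closed (@norm_hausdorff R X) cK.
  exact: gtoH.
- exact/attE.
- move=> K cK /attE aK; apply: Att_min => //.
  exact: compact_closed (@norm_hausdorff R X) cK.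
Qed.
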